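(* Let $V$ be a finite set, let $d$ be a monotone and consistent symmetric set function on $V$, and let $\tau\in\mathbb{R}$. Then the function $\hat d$ defined by $\hat d(S,T)=\min\{\tau,d(S,T)\}$ for disjoint $S,T\subseteq V$ is a monotone and consistent symmetric set function on $V$.
   Context: A symmetric set function $d$ on a finite set $V$ assigns a real number $d(S,T)$ to every ordered pair $(S,T)$ of disjoint subsets of $V$, such that $d(S,T)=d(T,S)$. It is monotone if $d(S,T')\leq d(S,T)$ whenever $S,T$ are disjoint and $T'\subseteq T$. It is consistent if for all pairwise disjoint $R,S,T\subseteq V$, $d(S,R)\geq d(T,R)$ implies $d(S,R\cup T)\geq d(S\cup R,T)$. *)

(* Defs.v *)
From mathcomp Require Import all_boot all_order all_algebra.
From mathcomp Require Import reals.
Set Implicit Arguments. Unset Strict Implicit. Unset Printing Implicit Defensive.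
Import Order.TTheory GRing.Theory Num.Theory.
Local Open Scope ring_scope.

(* A set function on V: assigns a real to each pair (S,T) of subsets; only its
   values on disjoint pairs matter. *)
Definition setfun (R : realType) (V : finType) := {set V} -> {set V} -> R.

Definition symmetric_sf (R : realType) (V : finType) (d : setfun R V) : Prop :=
  forall S T : {set V}, [disjoint S & T] -> d S T = d T S.

Definition monotone_sf (R : realType) (V : finType) (d : setfun R V) : Prop :=
  forall S T T' : {set V}, [disjoint S & T] -> T' \subset T -> d S T' <= d S T.

Definition consistent_sf (R : realType) (V : finType) (d : setfun R V) : Prop :=
  forall R0 S T : {set V},
    [disjoint R0 & S] -> [disjoint R0 & T] -> [disjoint S & T] ->
    d T R0 <= d S R0 -> d (S :|: R0) T <= d S (R0 :|: T).

Definition trunc_sf (R : realType) (V : finType) (tau : R) (d : setfun R V)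
  : setfun R V := fun S T => Num.min tau (d S T).

(* Main.v *)
Require Import Defs.
From mathcomp Require Import all_boot all_order all_algebra.
From mathcomp Require Import reals.
Import Order.TTheory GRing.Theory Num.Theory.
Local Open Scope ring_scope.

Theorem lemma3 (R : realType) (V : finType) (d : setfun R V) (tau : R) :
  symmetric_sf d -> monotone_sf d -> consistent_sf d ->
  [/\ symmetric_sf (trunc_sf tau d), monotone_sf (trunc_sf tau d)
    & consistent_sf (trunc_sf tau d)].
Proof.
move=> hs hm hc; split.
- by move=> S T h; rewrite /trunc_sf hs.
- move=> S T T' h s; rewrite /trunc_sf le_min !ge_min lexx /=.
  by rewrite (hm _ _ _ h s) orbT.
- move=> R0 S T h1 h2 h3; rewrite /trunc_sf => H.
  case: (leP (d T R0) (d S R0)) => hl.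
    rewrite le_min !ge_min lexx /=; by rewrite (hc _ _ _ h1 h2 h3 hl) orbT.
  have ht : tau <= d S R0.
    rewrite leNgt; apply/negP => hlt.
    move: H; rewrite le_min !ge_min.
    case/andP=> _ /orP [b|b].
    + by move: (le_lt_trans b hlt); rewrite ltxx.
    + by move: hl; rewrite ltNge b.
  have hd : [disjoint S & R0 :|: T].
    by rewrite -setI_eq0 setIUr setU_eq0 !setI_eq0 h3 disjoint_sym h1.
  have := hm S (R0 :|: T) R0 hd (subsetUl _ _) => hh.
  rewrite le_min !ge_min lexx /=.
  by rewrite (le_trans ht hh).
Qed.
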